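(* Let $K$ be a (not necessarily associative) ring with identity and $L$ a commutative associative ring with identity, and let $q\colon K\to L$ be a multiplicative quadratic map with $f(a,b)=q(a+b)-q(a)-q(b)$. Let $F$ be a subring of $L$ such that $K$ is an $F$-algebra, $q$ is $F$-quadratic, and every finitely generated $F$-submodule of $K$ is a free $F$-module. Let $\tilde K=L\otimes_F K$ (an $L$-algebra with $(\lambda\otimes a)(\mu\otimes b)=\lambda\mu\otimes ab$), write $\lambda a$ for $\lambda\otimes a$, and define $\tilde q\colon\tilde K\to L$ by $$\tilde q\Big(\sum_{i=1}^n\lambda_i a_i\Big)=\sum_{i=1}^n\lambda_i^2q(a_i)+\sum_{1\le i<j\le n}\lambda_i\lambda_j f(a_i,a_j)$$ for $a_i\in K$, $\lambda_i\in L$. Then $\tilde q$ is well defined and is a multiplicative $L$-quadratic map.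
   Context: A map $q\colon K\to L$ between rings with identity is called a multiplicative quadratic map if (i) $q(ab)=q(a)q(b)$ for all $a,b\in K$; (ii) $q(n\cdot 1_K)=n^2\cdot 1_L$ for all $n\in\mathbb{Z}$; (iii) the map $f\colon K\times K\to L$, $f(a,b)=q(a+b)-q(a)-q(b)$, is biadditive. If $F$ is a commutative associative ring such that $K$ and $L$ are $F$-algebras, $q$ is called $F$-quadratic if $f$ is $F$-bilinear and $q(\lambda a)=\lambda^2q(a)$ for all $a\in K$, $\lambda\in F$. *)

(* Defs.v *)
From HB Require Import structures.
From mathcomp Require Import all_boot all_order all_algebra.
Set Implicit Arguments. Unset Strict Implicit. Unset Printing Implicit Defensive.
Import Order.TTheory GRing.Theory Num.Theory.
Local Open Scope ring_scope.

Definition nonassoc_ring (K : zmodType) (mulK : K -> K -> K) (oneK : K) : Prop :=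
  [/\ forall a b c, mulK (a + b) c = mulK a c + mulK b c,
      forall a b c, mulK a (b + c) = mulK a b + mulK a c,
      forall a, mulK oneK a = a &
      forall a, mulK a oneK = a].

Definition qpolar (K : zmodType) (L : zmodType) (q : K -> L) (a b : K) : L :=
  q (a + b) - q a - q b.

Definition mult_quadratic (K : zmodType) (mulK : K -> K -> K) (oneK : K)
    (L : pzRingType) (q : K -> L) : Prop :=
  [/\ forall a b, q (mulK a b) = q a * q b,
      forall n : int, q (oneK *~ n) = (n ^+ 2)%:~R,
      forall a b c, qpolar q (a + b) c = qpolar q a c + qpolar q b c &
      forall a b c, qpolar q a (b + c) = qpolar q a b + qpolar q a c].

Definition falgebra_mul (F : pzRingType) (K : lmodType F) (mulK : K -> K -> K) : Prop :=
  forall (c : F) a b, mulK (c *: a) b = c *: mulK a b /\ mulK a (c *: b) = c *: mulK a b.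

Definition F_quadratic (F : pzRingType) (K : lmodType F) (L : pzRingType)
    (iota : F -> L) (q : K -> L) : Prop :=
  [/\ forall (c : F) a b, qpolar q (c *: a) b = iota c * qpolar q a b,
      forall (c : F) a b, qpolar q a (c *: b) = iota c * qpolar q a b &
      forall (c : F) a, q (c *: a) = iota c ^+ 2 * q a].

Definition L_quadratic (L : pzRingType) (T : lmodType L) (q : T -> L) : Prop :=
  [/\ forall (c : L) x y, qpolar q (c *: x) y = c * qpolar q x y,
      forall (c : L) x y, qpolar q x (c *: y) = c * qpolar q x y &
      forall (c : L) x, q (c *: x) = c ^+ 2 * q x].

Definition fg_span (F : pzRingType) (K : lmodType F) (n : nat) (s : 'I_n -> K) : K -> Prop :=
  fun x => exists c : 'I_n -> F, x = \sum_(i < n) c i *: s i.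

Definition free_submodule (F : pzRingType) (K : lmodType F) (P : K -> Prop) : Prop :=
  exists (m : nat) (b : 'I_m -> K),
    (forall i, P (b i)) /\
    (forall x, P x -> exists c : 'I_m -> F, x = \sum_(i < m) c i *: b i) /\
    (forall c : 'I_m -> F, \sum_(i < m) c i *: b i = 0 -> forall i, c i = 0).

Definition fg_submodules_free (F : pzRingType) (K : lmodType F) : Prop :=
  forall (n : nat) (s : 'I_n -> K), free_submodule (fg_span s).

(* (T, tens) is the tensor product L (x)_F K, where L is an F-module via iota:
   tens is F-balanced and biadditive, compatible with the L-action on T,
   and universal among F-balanced biadditive maps into abelian groups. *)
Definition is_tensor_product (F : pzRingType) (L : comPzRingType) (iota : F -> L)
    (K : lmodType F) (T : lmodType L) (tens : L -> K -> T) : Prop :=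
  [/\ forall l1 l2 a, tens (l1 + l2) a = tens l1 a + tens l2 a,
      forall l a b, tens l (a + b) = tens l a + tens l b,
      forall l (c : F) a, tens (l * iota c) a = tens l (c *: a),
      forall m l a, m *: tens l a = tens (m * l) a &
      forall (M : zmodType) (g : L -> K -> M),
        (forall l1 l2 a, g (l1 + l2) a = g l1 a + g l2 a) ->
        (forall l a b, g l (a + b) = g l a + g l b) ->
        (forall l (c : F) a, g (l * iota c) a = g l (c *: a)) ->
        exists h : T -> M,
          ((forall x y, h (x + y) = h x + h y) /\ (forall l a, h (tens l a) = g l a)) /\
          (forall h' : T -> M,
             (forall x y, h' (x + y) = h' x + h' y) ->
             (forall l a, h' (tens l a) = g l a) -> forall x, h' x = h x)].

(* Main.v *)
Require Import Defs.
From HB Require Import structures.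
From mathcomp Require Import all_boot all_order all_algebra.
From Stdlib Require Import ClassicalEpsilon.
From mathcomp Require Import ring.
Set Implicit Arguments. Unset Strict Implicit. Unset Printing Implicit Defensive.
Import Order.TTheory GRing.Theory Num.Theory.
Local Open Scope ring_scope.
Local Open Scope quotient_scope.

Section Conc.
Variables (F : pzRingType) (L : comPzRingType) (K : lmodType F) (T : lmodType L).
Variables (tens : L -> K -> T) (q : K -> L).

Definition tsum (r : seq (L * K)) : T := \sum_(p <- r) tens p.1 p.2.
Definition Gf (r : seq (L * K)) (b : K) : L := \sum_(p <- r) p.1 * qpolar q b p.2.
Fixpoint Qs (r : seq (L * K)) : L :=
  match r with [::] => 0 | p :: r' => p.1 ^+ 2 * q p.2 + p.1 * Gf r' p.2 + Qs r' end.
Definition Fb (r s : seq (L * K)) : L := \sum_(p <- r) p.1 * Gf s p.2.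
Definition negs (r : seq (L * K)) := [seq (- p.1, p.2) | p <- r].
Definition Hyp : Prop :=
  (forall l1 l2 a, tens (l1 + l2) a = tens l1 a + tens l2 a) /\
  (forall a, qpolar q a a = q a *+ 2).
Definition eqv (r s : seq (L * K)) : Prop :=
  Hyp -> [/\ tsum r = tsum s, Qs r = Qs s & forall b, Gf r b = Gf s b].
Definition eqvb r s : bool := if excluded_middle_informative (eqv r s) then true else false.
Lemma eqvbP r s : reflect (eqv r s) (eqvb r s).
Proof. by rewrite /eqvb; case: excluded_middle_informative => h; constructor. Qed.

Lemma eqv_refl r : eqv r r. Proof. by []. Qed.
Lemma eqv_sym r s : eqv r s -> eqv s r.
Proof. by move=> h H; case: (h H) => a b c; split=> // x; rewrite c. Qed.
Lemma eqv_trans r s t : eqv r s -> eqv s t -> eqv r t.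
Proof.
move=> h1 h2 H; case: (h1 H) => a b c; case: (h2 H) => a' b' c'.
by split; [rewrite a | rewrite b | move=> x; rewrite c].
Qed.

Lemma eqvb_refl : reflexive eqvb. Proof. by move=> r; apply/eqvbP/eqv_refl. Qed.
Lemma eqvb_sym : symmetric eqvb.
Proof. by move=> r s; apply/eqvbP/eqvbP => /eqv_sym. Qed.
Lemma eqvb_trans : transitive eqvb.
Proof. by move=> s r t /eqvbP h1 /eqvbP h2; apply/eqvbP; apply: eqv_trans h1 h2. Qed.

Definition erel := EquivRel eqvb eqvb_refl eqvb_sym eqvb_trans.
Definition Mq := {eq_quot erel}.
Definition piq (r : seq (L * K)) : Mq := \pi_{eq_quot erel} r.
Definition rep (x : Mq) : seq (L * K) := repr x.
Lemma piqK x : piq (rep x) = x. Proof. exact: reprK. Qed.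
Lemma piq_eq r s : eqv r s -> piq r = piq s.
Proof. by move=> h; apply/eqmodP/eqvbP. Qed.
Lemma rep_piq r : eqv (rep (piq r)) r.
Proof. apply/eqvbP; change (erel (rep (piq r)) r); apply/eqmodP; by rewrite /rep reprK. Qed.

Lemma qpolarC a b : qpolar q a b = qpolar q b a.
Proof. rewrite /qpolar [b + a]addrC; ring. Qed.

Lemma tsum_cat r s : tsum (r ++ s) = tsum r + tsum s.
Proof. by rewrite /tsum big_cat. Qed.
Lemma Gf_cat r s b : Gf (r ++ s) b = Gf r b + Gf s b.
Proof. by rewrite /Gf big_cat. Qed.
Lemma Fb_nil r : Fb [::] r = 0. Proof. by rewrite /Fb big_nil. Qed.
Lemma Fb_cons p r s : Fb (p :: r) s = p.1 * Gf s p.2 + Fb r s.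
Proof. by rewrite /Fb big_cons. Qed.
Lemma Qs_cat r s : Qs (r ++ s) = Qs r + Qs s + Fb r s.
Proof.
elim: r => [|p r IH] /=; first by rewrite Fb_nil add0r addr0.
rewrite IH Gf_cat Fb_cons; ring.
Qed.
Lemma Fb_catr r s1 s2 : Fb r (s1 ++ s2) = Fb r s1 + Fb r s2.
Proof. by rewrite /Fb -big_split /=; apply: eq_bigr => p _; rewrite Gf_cat mulrDr. Qed.
Lemma Fb_catl r1 r2 s : Fb (r1 ++ r2) s = Fb r1 s + Fb r2 s.
Proof. by rewrite /Fb big_cat. Qed.
Lemma Fb_sym r s : Fb r s = Fb s r.
Proof.
rewrite /Fb /Gf; under eq_bigr do rewrite big_distrr /=.
rewrite exchange_big /=; apply: eq_bigr => p _; rewrite big_distrr /=.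
apply: eq_bigr => p' _; rewrite qpolarC; ring.
Qed.
Lemma Gf_negs r b : Gf (negs r) b = - Gf r b.
Proof. by rewrite /Gf big_map -sumrN; apply: eq_bigr => p _ /=; rewrite mulNr. Qed.
Lemma Qs_negs r : Qs (negs r) = Qs r.
Proof. elim: r => [|p r IH] //=; rewrite -/(negs r) IH Gf_negs; ring. Qed.
Lemma Fb_diag r : (forall a, qpolar q a a = q a *+ 2) -> Fb r r = Qs r *+ 2.
Proof.
move=> h2; elim: r => [|p r IH] /=; first by rewrite Fb_nil mul0rn.
rewrite Fb_cons Fb_sym Fb_cons IH /Gf big_cons h2 -/(Gf r p.2).
ring.
Qed.
Lemma tsum_negs r : Hyp -> tsum (negs r) = - tsum r.
Proof.
case=> h1 _; rewrite /tsum big_map -sumrN; apply: eq_bigr => p _ /=.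
have t0 : tens 0 p.2 = 0.
  have := h1 0 0 p.2; rewrite addr0 => /(congr1 (fun z => z - tens 0 p.2)).
  by rewrite subrr addrK => <-.
by apply/eqP; rewrite -addr_eq0 -h1 addNr t0.
Qed.
Lemma eqv_cat r1 s1 r2 s2 : eqv r1 s1 -> eqv r2 s2 -> eqv (r1 ++ r2) (s1 ++ s2).
Proof.
move=> e1 e2 H; case: (e1 H) => a1 b1 c1; case: (e2 H) => a2 b2 c2.
have Fr : forall r, Fb r r2 = Fb r s2.
  by move=> r; rewrite /Fb; apply: eq_bigr => p _; rewrite c2.
have Fl : forall r, Fb r1 r = Fb s1 r.
  by move=> r; rewrite Fb_sym [RHS]Fb_sym /Fb; apply: eq_bigr => p _; rewrite c1.
split; first by rewrite !tsum_cat a1 a2.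
  by rewrite !Qs_cat b1 b2 Fr Fl.
by move=> b; rewrite !Gf_cat c1 c2.
Qed.
Lemma eqv_negs r s : eqv r s -> eqv (negs r) (negs s).
Proof.
move=> e H; case: (e H) => a b c; split; first by rewrite !tsum_negs // a.
  by rewrite !Qs_negs.
by move=> x; rewrite !Gf_negs c.
Qed.

Definition addq (x y : Mq) : Mq := piq (rep x ++ rep y).
Definition oppq (x : Mq) : Mq := piq (negs (rep x)).
Definition zeroq : Mq := piq [::].

Lemma addqA : associative addq.
Proof.
move=> x y z; rewrite /addq; apply: piq_eq.
apply: (@eqv_trans _ (rep x ++ (rep y ++ rep z))).
  exact: eqv_cat (@eqv_refl _) (rep_piq _).
rewrite catA; apply: eqv_sym; exact: eqv_cat (rep_piq _) (@eqv_refl _).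
Qed.

Lemma addqC : commutative addq.
Proof.
move=> x y; rewrite /addq; apply: piq_eq => H; split.
- by rewrite !tsum_cat addrC.
- by rewrite !Qs_cat Fb_sym; ring.
- by move=> b; rewrite !Gf_cat addrC.
Qed.
Lemma add0q : left_id zeroq addq.
Proof.
move=> x; rewrite /addq -[RHS]piqK; apply: piq_eq.
exact: eqv_cat (rep_piq _) (@eqv_refl _).
Qed.
Lemma addNq : left_inverse zeroq oppq addq.
Proof.
move=> x; rewrite /addq /oppq /zeroq; apply: piq_eq.
apply: (@eqv_trans _ (negs (rep x) ++ rep x)).
  exact: eqv_cat (rep_piq _) (@eqv_refl _).
move=> H; split.
- by rewrite tsum_cat tsum_negs // addNr /tsum big_nil.
- rewrite Qs_cat Qs_negs /Fb big_map /=.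
  under eq_bigr do rewrite mulNr; rewrite sumrN -/(Fb _ _) Fb_diag; last by case: H.
  by rewrite /= -mulr2n subrr.
- by move=> b; rewrite Gf_cat Gf_negs addNr /Gf big_nil.
Qed.
End Conc.

HB.instance Definition _ F L K T tens q :=
  Choice.copy (@Mq F L K T tens q) {eq_quot (erel tens q)}.
HB.instance Definition _ F L K T tens q :=
  GRing.isZmodule.Build (@Mq F L K T tens q) (@addqA F L K T tens q)
    (@addqC F L K T tens q) (@add0q F L K T tens q) (@addNq F L K T tens q).

Section Main.
Variables (F L : comPzRingType) (iota : {rmorphism F -> L})
  (K : lmodType F) (mulK : K -> K -> K) (oneK : K)
  (HK : nonassoc_ring mulK oneK) (HKalg : falgebra_mul mulK)
  (q : K -> L) (Hq : mult_quadratic mulK oneK q) (HqF : F_quadratic iota q)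
  (T : lmodType L) (tens : L -> K -> T) (HT : is_tensor_product iota tens)
  (mulT : T -> T -> T)
  (HmulTl : forall x y z, mulT (x + y) z = mulT x z + mulT y z)
  (HmulTr : forall x y z, mulT x (y + z) = mulT x y + mulT x z)
  (HmulT : forall l m a b, mulT (tens l a) (tens m b) = tens (l * m) (mulK a b)).

Local Notation f := (qpolar q).
Local Notation tsum := (@tsum F L K T tens).
Local Notation Qs := (@Qs F L K q).
Local Notation Gf := (@Gf F L K q).
Local Notation Fb := (@Fb F L K q).

Lemma qD u v : q (u + v) = q u + q v + f u v.
Proof. rewrite /qpolar; ring. Qed.

Lemma q0 : q 0 = 0.
Proof. by case: Hq => _ h _ _; have := h 0; rewrite mulr0z => ->; rewrite expr0n /=. Qed.

Lemma q1 : q oneK = 1.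
Proof. by case: Hq => _ h _ _; have := h 1; rewrite mulr1z => ->; rewrite expr1n. Qed.

Lemma fdiag a : f a a = q a *+ 2.
Proof.
case: HqF => _ _ h.
have E : q (a + a) = iota 2%:R ^+ 2 * q a by rewrite -h scaler_nat.
rewrite /qpolar E rmorph_nat; ring.
Qed.

Lemma HypH : Hyp tens q.
Proof. by split; [case: HT | exact: fdiag]. Qed.

Lemma M1 a b b' : f (mulK a b) (mulK a b') = q a * f b b'.
Proof.
case: Hq => qm _ _ _; case: HK => _ dr _ _.
by rewrite /qpolar -dr !qm; ring.
Qed.
Lemma M2 a a' b : f (mulK a b) (mulK a' b) = f a a' * q b.
Proof.
case: Hq => qm _ _ _; case: HK => dl _ _ _.
by rewrite /qpolar -dl !qm; ring.
Qed.
Lemma M3 a a' b b' :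
  f (mulK a b) (mulK a' b') + f (mulK a b') (mulK a' b) = f a a' * f b b'.
Proof.
case: Hq => qm _ fl fr; case: HK => dl dr _ _.
have E := qm (a + a') (b + b').
rewrite dl !dr !qD !fl !fr !qm !M1 !M2 in E.
move/eqP: E; rewrite -subr_eq0 => /eqP E.
apply/eqP; rewrite -subr_eq0; apply/eqP; rewrite -[RHS]E.
ring.
Qed.

Definition pm (p p' : L * K) : L * K := (p.1 * p'.1, mulK p.2 p'.2).
Fixpoint prodl (r s : seq (L * K)) : seq (L * K) :=
  match r with [::] => [::] | p :: r' => map (pm p) s ++ prodl r' s end.

Lemma Gf_map_pm p s b :
  Gf [seq pm p p' | p' <- s] (mulK p.2 b) = p.1 * q p.2 * Gf s b.
Proof.
rewrite /Gf big_map big_distrr; apply: eq_bigr => p' _ /=; rewrite M1; ring.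
Qed.

Lemma Qs_map_pm p s : Qs [seq pm p p' | p' <- s] = p.1 ^+ 2 * q p.2 * Qs s.
Proof.
case: Hq => qm _ _ _.
elim: s => [|p' s IH] /=; first by rewrite mulr0.
rewrite IH Gf_map_pm qm; ring.
Qed.

Lemma W a a' s :
  \sum_(p <- s) p.1 * \sum_(p' <- s) p'.1 * f (mulK a p.2) (mulK a' p'.2)
  = f a a' * Qs s.
Proof.
elim: s => [|p0 s IH] /=; first by rewrite big_nil mulr0.
rewrite big_cons /= big_cons /= M2.
set S1 := \sum_(p' <- s) p'.1 * f (mulK a p0.2) (mulK a' p'.2).
set S2 := \sum_(i <- s) i.1 * f (mulK a i.2) (mulK a' p0.2).
have E2 : \sum_(j <- s) j.1 * \sum_(p' <- p0 :: s) p'.1 * f (mulK a j.2) (mulK a' p'.2)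
   = p0.1 * S2 + \sum_(p <- s) p.1 * \sum_(p' <- s) p'.1 * f (mulK a p.2) (mulK a' p'.2).
  rewrite /S2 big_distrr -big_split; apply: eq_bigr => i _; rewrite big_cons /=; ring.
have E3 : S1 + S2 = f a a' * Gf s p0.2.
  rewrite /S1 /S2 /Gf big_distrr -big_split /=; apply: eq_bigr => i _ /=.
  rewrite mulrCA -M3; ring.
rewrite E2 IH; apply/eqP; rewrite -subr_eq0; apply/eqP.
transitivity (p0.1 * (S1 + S2 - f a a' * Gf s p0.2)); first ring.
by rewrite E3 subrr mulr0.
Qed.

Lemma Gf_prodl r s c :
  Gf (prodl r s) c =
  \sum_(p <- r) p.1 * \sum_(p' <- s) p'.1 * f c (mulK p.2 p'.2).
Proof.
elim: r => [|p r IH] /=; first by rewrite /Gf !big_nil.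
rewrite Gf_cat IH big_cons; congr (_ + _).
rewrite /Gf big_map big_distrr; apply: eq_bigr => p' _ /=; ring.
Qed.

Lemma Qs_prodl r s : Qs (prodl r s) = Qs r * Qs s.
Proof.
elim: r => [|p r IH] /=; first by rewrite mul0r.
rewrite Qs_cat Qs_map_pm IH /Fb big_map.
have -> : \sum_(i <- s) (pm p i).1 * Gf (prodl r s) (pm p i).2 =
          p.1 * Gf r p.2 * Qs s.
  under eq_bigr do rewrite Gf_prodl /=.
  transitivity (\sum_(i <- s) \sum_(p0 <- r) p.1 * p0.1 * (i.1 *
     \sum_(p' <- s) p'.1 * f (mulK p.2 i.2) (mulK p0.2 p'.2))).
    apply: eq_bigr => i _; rewrite big_distrr /=; apply: eq_bigr => p0 _; ring.
  rewrite exchange_big /=.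
  transitivity (\sum_(p0 <- r) p.1 * p0.1 * (f p.2 p0.2 * Qs s)).
    apply: eq_bigr => p0 _; rewrite -W big_distrr /=; apply: eq_bigr => i _; ring.
  rewrite /Gf big_distrr big_distrl /=; apply: eq_bigr => p0 _ /=; ring.
ring.
Qed.

Definition scl (c : L) (r : seq (L * K)) := [seq (c * p.1, p.2) | p <- r].
Lemma Gf_scl c r b : Gf (scl c r) b = c * Gf r b.
Proof. by rewrite /Gf big_map big_distrr; apply: eq_bigr => p _ /=; ring. Qed.
Lemma Qs_scl c r : Qs (scl c r) = c ^+ 2 * Qs r.
Proof. elim: r => [|p r IH] /=; first by rewrite mulr0. rewrite -/(scl c r) IH Gf_scl; ring. Qed.
Lemma Fb_scll c r s : Fb (scl c r) s = c * Fb r s.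
Proof. by rewrite /Fb big_map big_distrr; apply: eq_bigr => p _ /=; ring. Qed.
Lemma Fb_sclr c r s : Fb r (scl c s) = c * Fb r s.
Proof. by rewrite /Fb big_distrr; apply: eq_bigr => p _ /=; rewrite Gf_scl; ring. Qed.

Lemma sum_enum (V : zmodType) n (G : 'I_n -> V) :
  \sum_(i <- enum 'I_n) G i = \sum_(i < n) G i.
Proof. by rewrite big_enum /=; apply: eq_bigl => i. Qed.

Lemma Qs_ord n (lam : 'I_n -> L) (a : 'I_n -> K) :
  Qs [seq (lam i, a i) | i <- enum 'I_n] =
  \sum_(i < n) lam i ^+ 2 * q (a i)
  + \sum_(i < n) \sum_(j < n | (i < j)%N) lam i * lam j * f (a i) (a j).
Proof.
elim: n lam a => [|n IH] lam a.
  by rewrite enum_ord0 /= !big_ord0 addr0.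
rewrite enum_ordSl /=.
have -> : [seq (lam i, a i) | i <- [seq lift ord0 i | i <- enum 'I_n]] =
   [seq (lam (lift ord0 i), a (lift ord0 i)) | i <- enum 'I_n] by rewrite -map_comp.
rewrite IH /Gf big_map sum_enum.
rewrite big_ord_recl [in RHS]big_ord_recl.
rewrite (big_mkcond (fun j : 'I_n.+1 => (ord0 < j)%N)) big_ord_recl /=.
have E1 : \sum_(i < n) (if (0 < lift ord0 i)%N then lam ord0 * lam (lift ord0 i) *
    f (a ord0) (a (lift ord0 i)) else 0) =
    lam ord0 * \sum_(i < n) lam (lift ord0 i) * f (a ord0) (a (lift ord0 i)).
  rewrite big_distrr; apply: eq_bigr => i _ /=; ring.
have E2 : \sum_(i < n) \sum_(j < n.+1 | (lift ord0 i < j)%N)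
    lam (lift ord0 i) * lam j * f (a (lift ord0 i)) (a j) =
  \sum_(i < n) \sum_(j < n | (i < j)%N)
    lam (lift ord0 i) * lam (lift ord0 j) * f (a (lift ord0 i)) (a (lift ord0 j)).
  apply: eq_bigr => i _; rewrite big_mkcond big_ord_recl /= add0r [RHS]big_mkcond; apply: eq_bigr => j _ /=; by rewrite /bump /= !add1n ltnS.
rewrite E1 E2 add0r; ring.
Qed.

Lemma main_inner :
  exists qt : T -> L,
    [/\ forall (n : nat) (lam : 'I_n -> L) (a : 'I_n -> K),
          qt (\sum_(i < n) tens (lam i) (a i)) =
            \sum_(i < n) lam i ^+ 2 * q (a i)
            + \sum_(i < n) \sum_(j < n | (i < j)%N) lam i * lam j * qpolar q (a i) (a j),
        mult_quadratic mulT (tens 1 oneK) qt &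
        L_quadratic qt].
Proof.
have H := HypH.
have HT' := HT; case: HT' => t1 t2 t3 t4 univ.
have piqD r s : piq tens q r + piq tens q s = piq tens q (r ++ s).
  apply: piq_eq; exact: eqv_cat (rep_piq _) (rep_piq _).
pose g := fun l a => piq tens q [:: (l, a)].
have g1 l1 l2 a : g (l1 + l2) a = g l1 a + g l2 a.
  rewrite /g piqD /=; apply: piq_eq => _; split.
  - by rewrite /tsum !big_cons !big_nil !addr0 t1.
  - by rewrite /= /Gf !big_cons !big_nil /= fdiag; ring.
  - by move=> b; rewrite /Gf !big_cons !big_nil /=; ring.
have g2 l a b : g l (a + b) = g l a + g l b.
  rewrite /g piqD /=; apply: piq_eq => _; split.
  - by rewrite /tsum !big_cons !big_nil !addr0 t2.
  - by rewrite /= /Gf !big_cons !big_nil /= qD; ring.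
  - case: Hq => _ _ _ fr.
    by move=> c; rewrite /Gf !big_cons !big_nil /= fr; ring.
have g3 l c a : g (l * iota c) a = g l (c *: a).
  rewrite /g; apply: piq_eq => _; case: HqF => _ fr qs; split.
  - by rewrite /tsum !big_cons !big_nil t3.
  - by rewrite /= /Gf !big_nil qs; ring.
  - by move=> b; rewrite /Gf !big_cons !big_nil /= fr; ring.
have [h [[hadd htens] _]] := univ (Mq tens q) g g1 g2 g3.
have [h0 [_ huniq]] := univ T tens t1 t2 t3.
pose k := fun x : Mq tens q => tsum (rep x).
have kadd x y : k (x + y) = k x + k y.
  rewrite /k -tsum_cat -{1}(piqK x) -{1}(piqK y) piqD.
  by case: (@rep_piq _ _ _ _ tens q (rep x ++ rep y) H).
have kh x : k (h x) = x.
  have e2 := huniq id (fun _ _ => erefl) (fun _ _ => erefl) x.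
  rewrite /= in e2; apply: (etrans _ (esym e2)); apply: (huniq (fun z => k (h z))).
  - by move=> x1 y1; rewrite hadd kadd.
  - move=> l a; rewrite htens /k /g; case: (@rep_piq _ _ _ _ tens q [:: (l, a)] H) => -> _ _.
    by rewrite /tsum big_cons big_nil addr0.
have h00 : h 0 = 0.
  have := hadd 0 0; rewrite addr0 => /(congr1 (fun z => z - h 0)).
  by rewrite subrr addrK => <-.
have hsum r : h (tsum r) = piq tens q r.
  elim: r => [|p r IH]; first by rewrite /tsum big_nil h00.
  by rewrite /tsum big_cons hadd -/(tsum r) IH htens /g piqD; case: p.
pose qt := fun x => Qs (rep (h x)).
have qtsum r : qt (tsum r) = Qs r.
  by rewrite /qt hsum; case: (@rep_piq _ _ _ _ tens q r H).
have surj x : x = tsum (rep (h x)) by rewrite -[LHS]kh.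
have polar r s : qpolar qt (tsum r) (tsum s) = Fb r s.
  by rewrite /qpolar -tsum_cat !qtsum Qs_cat; ring.
have sclE c r : c *: tsum r = tsum (scl c r).
  rewrite /tsum big_map scaler_sumr; apply: eq_bigr => p _ /=; exact: t4.
have mulT0 x : mulT x 0 = 0.
  have := HmulTr x 0 0; rewrite addr0 => /(congr1 (fun z => z - mulT x 0)).
  by rewrite subrr addrK => <-.
have mul0T x : mulT 0 x = 0.
  have := HmulTl 0 0 x; rewrite addr0 => /(congr1 (fun z => z - mulT 0 x)).
  by rewrite subrr addrK => <-.
have mulT_map p s0 : mulT (tens p.1 p.2) (tsum s0) = tsum [seq pm p p' | p' <- s0].
  elim: s0 => [|p' s0 IH]; first by rewrite /tsum !big_nil mulT0.
  by rewrite /tsum !big_cons HmulTr -!/(tsum _) IH HmulT.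
have mulT_tsum r s0 : mulT (tsum r) (tsum s0) = tsum (prodl r s0).
  elim: r => [|p r IH]; first by rewrite /tsum !big_nil mul0T.
  by rewrite /= tsum_cat /tsum big_cons HmulTl -!/(tsum _) IH mulT_map.
exists qt; split.
- move=> n lam a.
  have -> : \sum_(i < n) tens (lam i) (a i) = tsum [seq (lam i, a i) | i <- enum 'I_n].
    by rewrite /tsum big_map sum_enum.
  by rewrite qtsum Qs_ord.
- split.
  + move=> x y; rewrite (surj x) (surj y); move: (rep (h x)) (rep (h y)) => r s0.
    by rewrite mulT_tsum !qtsum Qs_prodl.
  + move=> n; rewrite -scaler_int.
    have -> : tens 1 oneK = tsum [:: (1, oneK)] by rewrite /tsum big_cons big_nil addr0.
    rewrite sclE qtsum Qs_scl /= /Gf big_nil q1 expr2 intrM; ring.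
  + move=> x y z; rewrite (surj x) (surj y) (surj z).
    move: (rep (h x)) (rep (h y)) (rep (h z)) => r1 r2 r3.
    by rewrite -tsum_cat !polar Fb_catl.
  + move=> x y z; rewrite (surj x) (surj y) (surj z).
    move: (rep (h x)) (rep (h y)) (rep (h z)) => r1 r2 r3.
    by rewrite -tsum_cat !polar Fb_catr.
- split.
  + move=> c x y; rewrite (surj x) (surj y); move: (rep (h x)) (rep (h y)) => r s0.
    by rewrite sclE !polar Fb_scll.
  + move=> c x y; rewrite (surj x) (surj y); move: (rep (h x)) (rep (h y)) => r s0.
    by rewrite sclE !polar Fb_sclr.
  + move=> c x; rewrite (surj x); move: (rep (h x)) => r.
    by rewrite sclE !qtsum Qs_scl.
Qed.
End Main.

Local Close Scope quotient_scope.

Theorem proposition2p3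
  (F L : comPzRingType) (iota : {rmorphism F -> L}) (iota_inj : injective iota)
  (K : lmodType F) (mulK : K -> K -> K) (oneK : K)
  (HK : nonassoc_ring mulK oneK) (HKalg : falgebra_mul mulK)
  (q : K -> L) (Hq : mult_quadratic mulK oneK q) (HqF : F_quadratic iota q)
  (Hfree : fg_submodules_free K)
  (T : lmodType L) (tens : L -> K -> T) (HT : is_tensor_product iota tens)
  (mulT : T -> T -> T)
  (HmulTl : forall x y z, mulT (x + y) z = mulT x z + mulT y z)
  (HmulTr : forall x y z, mulT x (y + z) = mulT x y + mulT x z)
  (HmulT : forall l m a b, mulT (tens l a) (tens m b) = tens (l * m) (mulK a b)) :
  exists qt : T -> L,
    [/\ forall (n : nat) (lam : 'I_n -> L) (a : 'I_n -> K),
          qt (\sum_(i < n) tens (lam i) (a i)) =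
            \sum_(i < n) lam i ^+ 2 * q (a i)
            + \sum_(i < n) \sum_(j < n | (i < j)%N) lam i * lam j * qpolar q (a i) (a j),
        mult_quadratic mulT (tens 1 oneK) qt &
        L_quadratic qt].
Proof.
exact: (@main_inner F L iota K mulK oneK HK q Hq HqF T tens HT mulT HmulTl HmulTr HmulT).
Qed.
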